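(* Let $f,g:\{0,1,\dots,n\}\to\mathbb{R}$ be given as arrays, where $f$ is concave and $g$ is oscillating concave. Then the (max,+) convolution $h(k)=\max_{1\le i\le k}\bigl(f(i)+g(k-i)\bigr)$ for $1\le k\le n$ can be computed for all $k$ in $O(n)$ total time.
   Context: $f$ is concave if $f(i+1)-f(i)$ is non-increasing in $i$. A function $g$ is oscillating concave if for all $k$ (whenever the arguments lie in the domain): (1) $g(2k)-g(2k-2)\ge g(2k+2)-g(2k)$; (2) $g(2k+2)-g(2k+1)\ge g(2k+1)-g(2k)$; (3) $g(2k+1)-g(2k)\le g(2k)-g(2k-1)$; (4) $g(2k+1)-g(2k)$ is (weakly) decreasing in $k$; (5) $g(2k)-g(2k-1)$ is (weakly) decreasing in $k$. Arithmetic and comparisons of values take $O(1)$ time. *)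

(* Defs.v *)
From mathcomp Require Import all_boot all_order all_algebra.
From mathcomp Require Import reals.
Set Implicit Arguments. Unset Strict Implicit. Unset Printing Implicit Defensive.
Import Order.TTheory GRing.Theory Num.Theory.
Local Open Scope ring_scope.

(* Cost model.  An algorithm manipulates values of an ABSTRACT type T  *)
(* (it is polymorphic in T, so it can only touch values through the    *)
(* primitives below).  Each primitive (array read of f or g, addition, *)
(* subtraction, multiplication, comparison) costs one unit; control    *)
(* flow / index bookkeeping is expressed by Coq functions.             *)
Inductive comp (T A : Type) : Type :=
| Ret  : A -> comp T A
| ReadF : nat -> (T -> comp T A) -> comp T A
| ReadG : nat -> (T -> comp T A) -> comp T A
| Add  : T -> T -> (T -> comp T A) -> comp T A
| Sub  : T -> T -> (T -> comp T A) -> comp T A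
| Mul  : T -> T -> (T -> comp T A) -> comp T A
| Leq  : T -> T -> (bool -> comp T A) -> comp T A.

Arguments Ret {T A}.
Arguments ReadF {T A}.
Arguments ReadG {T A}.
Arguments Add {T A}.
Arguments Sub {T A}.
Arguments Mul {T A}.
Arguments Leq {T A}.

Fixpoint run (R : realType) (f g : nat -> R) (A : Type) (c : comp R A)
  : A * nat :=
  match c with
  | Ret a => (a, 0%N)
  | ReadF i k => let r := run f g (k (f i)) in (r.1, r.2.+1)
  | ReadG i k => let r := run f g (k (g i)) in (r.1, r.2.+1)
  | Add x y k => let r := run f g (k (x + y)) in (r.1, r.2.+1)
  | Sub x y k => let r := run f g (k (x - y)) in (r.1, r.2.+1)
  | Mul x y k => let r := run f g (k (x * y)) in (r.1, r.2.+1)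
  | Leq x y k => let r := run f g (k (x <= y)) in (r.1, r.2.+1)
  end.

Definition algorithm := nat -> forall T : Type, comp T (seq T).

Definition concave_on (R : realType) (n : nat) (f : nat -> R) : Prop :=
  forall i : nat, (i.+2 <= n)%N -> f i.+2 - f i.+1 <= f i.+1 - f i.

Definition osc_concave_on (R : realType) (n : nat) (g : nat -> R) : Prop :=
  (* (1) g(2k)-g(2k-2) >= g(2k+2)-g(2k), k >= 1 *)
  (forall k : nat, (1 <= k)%N -> (k.*2.+2 <= n)%N ->
      g k.*2.+2 - g k.*2 <= g k.*2 - g k.*2.-2) /\
  (* (2) g(2k+2)-g(2k+1) >= g(2k+1)-g(2k) *)
  (forall k : nat, (k.*2.+2 <= n)%N ->
      g k.*2.+1 - g k.*2 <= g k.*2.+2 - g k.*2.+1) /\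
  (* (3) g(2k+1)-g(2k) <= g(2k)-g(2k-1), k >= 1 *)
  (forall k : nat, (1 <= k)%N -> (k.*2.+1 <= n)%N ->
      g k.*2.+1 - g k.*2 <= g k.*2 - g k.*2.-1) /\
  (* (4) g(2k+1)-g(2k) weakly decreasing in k *)
  (forall k : nat, (k.+1.*2.+1 <= n)%N ->
      g k.+1.*2.+1 - g k.+1.*2 <= g k.*2.+1 - g k.*2) /\
  (* (5) g(2k)-g(2k-1) weakly decreasing in k (k >= 1) *)
  (forall k : nat, (1 <= k)%N -> (k.+1.*2 <= n)%N ->
      g k.+1.*2 - g k.+1.*2.-1 <= g k.*2 - g k.*2.-1).

Definition maxplus_conv (R : realType) (f g : nat -> R) (k : nat) : R :=
  \big[Num.max/(f 1%N + g (k - 1)%N)]_(1 <= i < k.+1) (f i + g (k - i)%N).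

(* Main.v *)
Require Import Defs.
From mathcomp Require Import all_boot all_order all_algebra.
From mathcomp Require Import reals.
From mathcomp Require Import zify lra.
Import Order.TTheory GRing.Theory Num.Theory.

Fixpoint bind {T A B : Type} (c : Defs.comp T A) (k : A -> Defs.comp T B) : Defs.comp T B :=
  match c with
  | Ret a => k a
  | ReadF i c' => ReadF i (fun x => bind (c' x) k)
  | ReadG i c' => ReadG i (fun x => bind (c' x) k)
  | Add x y c' => Add x y (fun z => bind (c' z) k)
  | Defs.Sub x y c' => Defs.Sub x y (fun z => bind (c' z) k)
  | Mul x y c' => Mul x y (fun z => bind (c' z) k)
  | Leq x y c' => Leq x y (fun z => bind (c' z) k)
  end.

Lemma run_bind (R : realType) (f g : nat -> R) A B (c : Defs.comp R A) (k : A -> Defs.comp R B) :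
  run f g (bind c k) =
  ((run f g (k (run f g c).1)).1, ((run f g c).2 + (run f g (k (run f g c).1)).2)%N).
Proof.
elim: c => [a|i c IH|i c IH|x y c IH|x y c IH|x y c IH|x y c IH] /=;
  try by rewrite IH.
by case: (run f g (k a)).
Qed.

Fixpoint gloop {T : Type} (a b L t m : nat) (cur : T) : Defs.comp T (seq T) :=
  match L with
  | 0 => Ret [:: cur]
  | L'.+1 =>
    ReadF (t.+1.*2 + a) (fun f1 => ReadG (m.*2 + b) (fun g0 => Add f1 g0 (fun v1 =>
    ReadF (t.*2 + a) (fun f0 => ReadG (m.+1.*2 + b) (fun g1 => Add f0 g1 (fun v2 =>
    Leq v2 v1 (fun c => bind (if c then gloop a b L' t.+1 m v1 else gloop a b L' t m.+1 v2)
                         (fun r => Ret (cur :: r)))))))))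
  end.

Definition gstart {T : Type} (a b L : nat) : Defs.comp T (seq T) :=
  ReadF (0.*2 + a) (fun f0 => ReadG (0.*2 + b) (fun g0 => Add f0 g0 (fun v => gloop a b L 0 0 v))).

Fixpoint zipmax {T : Type} (l1 l2 : seq T) : Defs.comp T (seq T) :=
  match l1, l2 with
  | x :: l1', y :: l2' => Leq x y (fun c => bind (zipmax l1' l2') (fun r => Ret ((if c then y else x) :: r)))
  | _, _ => Ret [::]
  end.

Fixpoint interleave {A : Type} (l1 l2 : seq A) : seq A :=
  match l1, l2 with
  | x :: l1', y :: l2' => x :: y :: interleave l1' l2'
  | _, _ => [::]
  end.

Definition the_alg : algorithm := fun n T =>
  let L := n./2.+1 in
  bind (gstart 1 0 L) (fun la => bind (gstart 2 1 L) (fun lb =>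
  bind (gstart 1 1 L) (fun lc => bind (gstart 2 0 L) (fun ld =>
  match la with
  | [::] => Ret [::]
  | a0 :: la' => bind (zipmax la' lb) (fun lo => bind (zipmax lc ld) (fun le =>
                  Ret (take n (interleave (a0 :: lo) le))))
  end)))).

Local Open Scope ring_scope.
Section Math.
Variable R : realType.

Definition mx (x y : R) := if x <= y then y else x.
Definition nxt (F G : nat -> R) (p : nat * nat) : nat * nat :=
  if F p.1 + G p.2.+1 <= F p.1.+1 + G p.2 then (p.1.+1, p.2) else (p.1, p.2.+1).
Definition vl (F G : nat -> R) (p : nat * nat) := F p.1 + G p.2.
Definition cv (F G : nat -> R) (s : nat) := vl F G (iter s (nxt F G) (0%N, 0%N)).

Lemma run_gloop (f g : nat -> R) a b L t m :
  run f g (gloop a b L t m (vl (fun t => f (t.*2 + a)%N) (fun m => g (m.*2 + b)%N) (t, m))) =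
  ([seq vl (fun t => f (t.*2 + a)%N) (fun m => g (m.*2 + b)%N) p | p <- traject (nxt (fun t => f (t.*2 + a)%N) (fun m => g (m.*2 + b)%N)) (t, m) L.+1], (7 * L)%N).
Proof.
elim: L t m => [|L IH] t m //=.
rewrite /nxt /=.
case: ifP => _; rewrite run_bind IH /=; congr (_, _); lia.
Qed.

Lemma traject_iota (T : Type) (h : T -> T) x n :
  traject h x n = [seq iter i h x | i <- iota 0 n].
Proof.
elim: n x => [|n IH] x //=.
have -> : iota 1 n = map (addn 1) (iota 0 n) by rewrite -iotaDl.
rewrite IH -map_comp; congr (_ :: _).
by apply: eq_map => i /=; rewrite add0n -iterSr.
Qed.

Lemma run_gstart (f g : nat -> R) a b L :
  run f g (gstart a b L) =
  ([seq cv (fun t => f (t.*2 + a)%N) (fun m => g (m.*2 + b)%N) s | s <- iota 0 L.+1],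
   (7 * L).+3).
Proof.
rewrite /gstart /=.
have H := run_gloop f g a b L 0 0.
rewrite traject_iota -map_comp in H.
move: H; rewrite /vl /=; move=> ->; by [].
Qed.

Lemma run_zipmax (f g : nat -> R) (l1 l2 : seq R) :
  run f g (zipmax l1 l2) = ([seq mx p.1 p.2 | p <- zip l1 l2], size (zip l1 l2)).
Proof.
elim: l1 l2 => [|x l1 IH] [|y l2] //.
by rewrite /= run_bind IH /= addn0.
Qed.


Lemma slope_mono (H : nat -> R) N :
  (forall i, (i.+2 <= N)%N -> H i.+2 - H i.+1 <= H i.+1 - H i) ->
  forall a b, (a <= b)%N -> (b.+1 <= N)%N -> H b.+1 - H b <= H a.+1 - H a.
Proof.
move=> HH a b; elim: b => [|b IH].
  by rewrite leqn0 => /eqP ->.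
rewrite leq_eqVlt => /orP [/eqP -> // | ab] bN.
have := IH ab (ltnW bN); have := HH b bN; lra.
Qed.

Lemma greedy_opt (F G : nat -> R) s :
  (forall a b, (a <= b)%N -> (b < s)%N -> F b.+1 - F b <= F a.+1 - F a) ->
  (forall a b, (a <= b)%N -> (b < s)%N -> G b.+1 - G b <= G a.+1 - G a) ->
  ((iter s (nxt F G) (0, 0)%N).1 + (iter s (nxt F G) (0, 0)%N).2 = s)%N /\
  forall t, (t <= s)%N -> F t + G (s - t)%N <= cv F G s.
Proof.
elim: s => [|s IH] HF HG.
  split=> // t; rewrite leqn0 => /eqP ->; by rewrite /cv /vl.
have [Hs Hopt] := IH (fun a b ab bs => HF a b ab (ltnW bs))
                     (fun a b ab bs => HG a b ab (ltnW bs)).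
rewrite /cv /= in Hopt *.
move: Hs Hopt; set p := iter s _ _ => Hs Hopt.
have [H1 H2] : F p.1.+1 + G p.2 <= vl F G (nxt F G p) /\
               F p.1 + G p.2.+1 <= vl F G (nxt F G p).
  rewrite /nxt; case: ifP => H /=; rewrite /vl /=; split => //.
  by move/negbT: H; rewrite -ltNge => /ltW.
split.
  by rewrite /nxt; case: ifP => _ /=; lia.
move=> t ts.
case: (ltnP p.1 t) => Ht.
  case: t Ht ts => [//|t] Ht ts.
  have := Hopt t ts; have := HF p.1 t Ht ts.
  rewrite subSS; move: H1 H2; rewrite /vl; lra.
have e : (s.+1 - t = (s - t).+1)%N by lia.
rewrite e.
have := Hopt t (leq_trans Ht (leq_trans (leq_addr _ _) (eq_leq Hs))).
have := HG p.2 (s - t)%N ltac:(lia) ltac:(lia).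
move: H1 H2; rewrite /vl; lra.
Qed.


Lemma fpar n (f : nat -> R) c s : concave_on n f -> (s.*2 + c <= n)%N ->
  forall a b, (a <= b)%N -> (b < s)%N ->
  f (b.+1.*2 + c)%N - f (b.*2 + c)%N <= f (a.+1.*2 + c)%N - f (a.*2 + c)%N.
Proof.
move=> Hf Hs a b ab bs.
have sl := @slope_mono f n Hf.
have e1 : (b.+1.*2 + c = (b.*2 + c).+2)%N by lia.
have e2 : (a.+1.*2 + c = (a.*2 + c).+2)%N by lia.
rewrite e1 e2.
have := sl (a.*2 + c).+1 (b.*2 + c).+1 ltac:(lia) ltac:(lia).
have := sl (a.*2 + c)%N (b.*2 + c)%N ltac:(lia) ltac:(lia).
lra.
Qed.

Lemma gpar n (g : nat -> R) c s : osc_concave_on n g -> (c <= 1)%N -> (s.*2 + c <= n)%N ->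
  forall a b, (a <= b)%N -> (b < s)%N ->
  g (b.+1.*2 + c)%N - g (b.*2 + c)%N <= g (a.+1.*2 + c)%N - g (a.*2 + c)%N.
Proof.
move=> [H1 [H2 [H3 [H4 H5]]]] c1 Hs.
apply: (@slope_mono (fun t => g (t.*2 + c)%N) s) => i iN.
case: c c1 Hs => [|[|//]] _ Hs.
  have := H1 i.+1 isT ltac:(lia).
  rewrite !addn0 !doubleS /=; lra.
have := H4 i.+1 ltac:(lia).
have := H5 i.+1 isT ltac:(lia).
rewrite !addn1 !doubleS /=; lra.
Qed.


Lemma piece n (f g : nat -> R) c d s k : concave_on n f -> osc_concave_on n g ->
  (d <= 1)%N -> (1 <= c)%N -> (s.*2 + c <= n)%N -> (s.*2 + d <= n)%N ->
  k = (s.*2 + c + d)%N ->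
  (exists2 i, (1 <= i <= k)%N &
     cv (fun t => f (t.*2 + c)%N) (fun m => g (m.*2 + d)%N) s = f i + g (k - i)%N) /\
  (forall t, (t <= s)%N -> f (t.*2 + c)%N + g (k - (t.*2 + c))%N <=
     cv (fun t => f (t.*2 + c)%N) (fun m => g (m.*2 + d)%N) s).
Proof.
move=> Hf Hg d1 c1 Hcn Hdn ek.
have [Hs Hopt] := @greedy_opt (fun t => f (t.*2 + c)%N) (fun m => g (m.*2 + d)%N) s
   (@fpar n f c s Hf Hcn) (@gpar n g d s Hg d1 Hdn).
move: Hs Hopt; rewrite /cv; set p := iter s _ _ => Hs Hopt.
split.
  exists (p.1.*2 + c)%N; first lia.
  rewrite /vl /=.
  have -> : (k - (p.1.*2 + c) = p.2.*2 + d)%N by lia.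
  by [].
move=> t ts; have := Hopt t ts.
by have -> : (k - (t.*2 + c) = (s - t).*2 + d)%N by lia.
Qed.

Lemma mx_ge x y : x <= mx x y /\ y <= mx x y.
Proof.
rewrite /mx; case: ifP => H; split => //.
by move/negbT: H; rewrite -ltNge => /ltW.
Qed.

Lemma conv_char (f g : nat -> R) k v : (0 < k)%N ->
  (exists2 i, (1 <= i <= k)%N & v = f i + g (k - i)%N) ->
  (forall i, (1 <= i <= k)%N -> f i + g (k - i)%N <= v) ->
  maxplus_conv f g k = v.
Proof.
move=> k0 [i ik ->] Hup; apply/le_anti/andP; split.
  rewrite /maxplus_conv big_seq_cond; apply: bigmax_le => [|j].
    by apply: Hup; lia.
  by rewrite mem_index_iota andbT => jk; apply: Hup; lia.
rewrite /maxplus_conv.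
apply: (le_bigmax_seq _ i) => //.
by rewrite mem_index_iota; lia.
Qed.


Definition cvA (f g : nat -> R) := cv (fun t => f (t.*2 + 1)%N) (fun m => g (m.*2 + 0)%N).
Definition cvB (f g : nat -> R) := cv (fun t => f (t.*2 + 2)%N) (fun m => g (m.*2 + 1)%N).
Definition cvC (f g : nat -> R) := cv (fun t => f (t.*2 + 1)%N) (fun m => g (m.*2 + 1)%N).
Definition cvD (f g : nat -> R) := cv (fun t => f (t.*2 + 2)%N) (fun m => g (m.*2 + 0)%N).
Definition ho f g u := if u is u'.+1 then mx (cvA f g u) (cvB f g u') else cvA f g 0.
Definition he f g u := mx (cvC f g u) (cvD f g u).
Definition hh f g k := if odd k then ho f g k./2 else he f g (k./2).-1.

Lemma hh_correct n (f g : nat -> R) k : concave_on n f -> osc_concave_on n g ->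
  (1 <= k <= n)%N -> maxplus_conv f g k = hh f g k.
Proof.
move=> Hf Hg /andP[k1 kn].
have kdh := odd_double_half k.
rewrite /hh; case: ifP => ko; rewrite ko /= in kdh.
  set u := k./2 in kdh *.
  have [exA bA] := @piece n f g 1 0 u k Hf Hg isT isT ltac:(lia) ltac:(lia) ltac:(lia).
  apply: conv_char; first lia.
    case: u kdh exA bA => [|u'] kdh exA bA; first by [].
    have [exB bB] := @piece n f g 2 1 u' k Hf Hg isT isT ltac:(lia) ltac:(lia) ltac:(lia).
    by rewrite /= /mx; case: ifP.
  move=> i /andP[i1 ik].
  have idh := odd_double_half i.
  case: (boolP (odd i)) => io; rewrite ?io /= in idh.
    have [t ei] : exists t, i = (t.*2 + 1)%N by exists i./2; lia.
    rewrite ei; apply: le_trans (bA t ltac:(lia)) _.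
    by case: u kdh exA bA => [|u'] //= *; case: (mx_ge (cvA f g u'.+1) (cvB f g u')).
  rewrite (negbTE io) /= in idh.
  have [t ei] : exists t, i = (t.*2 + 2)%N by exists (i./2).-1; lia.
  case: u kdh exA bA => [|u'] kdh exA bA; first lia.
  have [exB bB] := @piece n f g 2 1 u' k Hf Hg isT isT ltac:(lia) ltac:(lia) ltac:(lia).
  rewrite ei; apply: le_trans (bB t ltac:(lia)) _.
  by case: (mx_ge (cvA f g u'.+1) (cvB f g u')).
set u := (k./2).-1.
have [exC bC] := @piece n f g 1 1 u k Hf Hg isT isT ltac:(lia) ltac:(lia) ltac:(lia).
have [exD bD] := @piece n f g 2 0 u k Hf Hg isT isT ltac:(lia) ltac:(lia) ltac:(lia).
apply: conv_char; first lia.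
  by rewrite /he /mx; case: ifP.
move=> i /andP[i1 ik].
have idh := odd_double_half i.
have [Cm Dm] := mx_ge (cvC f g u) (cvD f g u).
case: (boolP (odd i)) => io; rewrite ?io /= in idh.
  have [t ei] : exists t, i = (t.*2 + 1)%N by exists i./2; lia.
  by rewrite ei; apply: le_trans (bC t ltac:(lia)) _.
rewrite (negbTE io) /= in idh.
have [t ei] : exists t, i = (t.*2 + 2)%N by exists (i./2).-1; lia.
by rewrite ei; apply: le_trans (bD t ltac:(lia)) _.
Qed.

End Math.

Lemma zip_iota (A B : Type) (P : nat -> A) (Q : nat -> B) s s' L e :
  zip [seq P i | i <- iota s L] [seq Q i | i <- iota s' (L + e)] =
  [seq (P (s + i)%N, Q (s' + i)%N) | i <- iota 0 L].
Proof.
elim: L s s' => [|L IH] s s' /=.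
  by case: (iota s' e).
rewrite IH addn0 addn0.
have -> : iota 1 L = map (addn 1) (iota 0 L) by rewrite -iotaDl.
rewrite -map_comp; congr (_ :: _).
by apply: eq_map => i /=; rewrite !addSnnS.
Qed.

Lemma interleave_map (A : Type) (P Q : nat -> A) s M :
  interleave [seq P i | i <- iota s M] [seq Q i | i <- iota s M] =
  [seq (if odd k then P k./2 else Q (k./2).-1) | k <- iota s.*2.+1 M.*2].
Proof.
elim: M s => [|M IH] s //=.
rewrite IH doubleS odd_double uphalf_double doubleK /=.
by [].
Qed.


Lemma map_iota0S (A : Type) (F : nat -> A) L :
  [seq F s | s <- iota 0 L.+1] = F 0%N :: [seq F s | s <- iota 1 L].
Proof. by []. Qed.

Lemma run_alg (R : realType) n (f g : nat -> R) :
  run f g (the_alg n R) =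
  (take n (interleave [seq ho R f g u | u <- iota 0 (n./2.+2)]
                      [seq he R f g u | u <- iota 0 (n./2.+2)]),
   (4 * (7 * n./2.+1).+3 + n./2.+1 + n./2.+2)%N).
Proof.
rewrite /the_alg; set L := n./2.+1.
have eL : L = n./2.+1 by [].
clearbody L.
rewrite run_bind run_gstart; cbv beta iota delta [fst snd].
rewrite run_bind run_gstart; cbv beta iota delta [fst snd].
rewrite run_bind run_gstart; cbv beta iota delta [fst snd].
rewrite run_bind run_gstart; cbv beta iota delta [fst snd].
rewrite map_iota0S; cbv beta iota delta [fst snd].
rewrite run_bind run_zipmax; cbv beta iota delta [fst snd].
rewrite run_bind run_zipmax; cbv beta iota delta [fst snd].
cbv beta iota delta [run].
have e1 := zip_iota _ _ (fun s => cvA R f g s) (fun s => cvB R f g s) 1 0 L 1.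
have e0 := zip_iota _ _ (fun s => cvC R f g s) (fun s => cvD R f g s) 0 0 L.+1 0.
rewrite addn1 in e1; rewrite addn0 in e0.
rewrite /cvA /cvB /cvC /cvD in e0 e1.
rewrite e1 e0 !size_map !size_iota.
rewrite !map_iota0S.
have -> : iota 1 L = map (addn 1) (iota 0 L) by rewrite -iotaDl.
rewrite -!map_comp.
have mc : forall (A B : Type) (h : A -> B) x s, map h (x :: s) = h x :: map h s by [].
rewrite mc -!map_comp.
congr (_, _); last lia.
Qed.

Local Open Scope ring_scope.
Theorem lemma6 (R : realType) :
  exists (alg : algorithm) (C : nat),
    forall (n : nat) (f g : nat -> R),
      concave_on n f -> osc_concave_on n g ->
      (run f g (alg n R)).1 = [seq maxplus_conv f g k | k <- iota 1 n] /\
      ((run f g (alg n R)).2 <= C * n.+1)%N.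
Proof.
exists the_alg, 50%N => n f g Hf Hg.
rewrite run_alg; split; last by cbn [snd]; lia.
cbn [fst].
rewrite interleave_map -map_take take_iota.
have -> : minn n (n./2.+2).*2 = n by lia.
change (iota 0.*2.+1 n) with (iota 1 n).
apply/eq_in_map => k; rewrite mem_iota => /andP [k1 k2].
have kr : (1 <= k <= n)%N by apply/andP; split; lia.
by rewrite (@hh_correct R n f g k Hf Hg kr).
Qed.
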